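(* Let $m$ be a positive integer and let $\phi_1,\phi_2,\phi_3$ be pairwise distinct permutations of $\mathbb{F}_{2^m}$ such that $\psi=\phi_1+\phi_2+\phi_3$ is a permutation of $\mathbb{F}_{2^m}$ and $\psi^{-1}=\phi_1^{-1}+\phi_2^{-1}+\phi_3^{-1}$. Let $h_1,h_2,h_3:\mathbb{F}_{2^m}\to\mathbb{F}_2$ and define $f_j:\mathbb{F}_{2^m}\times\mathbb{F}_{2^m}\to\mathbb{F}_2$ by $f_j(x,y)=Tr(x\phi_j(y))+h_j(y)$ for $j=1,2,3$. Suppose that for all $x\in\mathbb{F}_{2^m}$, $$h_1(\phi_1^{-1}(x))+h_2(\phi_2^{-1}(x))+h_3(\phi_3^{-1}(x))+(h_1+h_2+h_3)(\psi^{-1}(x))=1.$$ Then $f_1,f_2,f_3$ and $f_4=f_1+f_2+f_3$ are bent and $f_1^*+f_2^*+f_3^*+f_4^*=1$ identically.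
   Context: $Tr$ denotes the absolute trace $\mathbb{F}_{2^m}\to\mathbb{F}_2$. A Boolean function $F:\mathbb{F}_{2^m}\times\mathbb{F}_{2^m}\to\mathbb{F}_2$ is bent if its Walsh transform $W_F(a,b)=\sum_{x,y}(-1)^{F(x,y)+Tr(ax+by)}$ satisfies $|W_F(a,b)|=2^m$ for all $(a,b)$; its dual $F^*$ is the Boolean function defined by $W_F(a,b)=2^m(-1)^{F^*(a,b)}$. *)

(* Defs.v *)
From HB Require Import structures.
From mathcomp Require Import all_boot all_order all_algebra all_fingroup all_field.
Set Implicit Arguments. Unset Strict Implicit. Unset Printing Implicit Defensive.
Import Order.TTheory GRing.Theory Num.Theory.
Local Open Scope ring_scope.

(* F plays the role of F_{2^m}; F_2 is identified with bool (addition = xor). *)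

(* Absolute trace F_{2^m} -> F_2: Tr x = sum_{i<m} x^(2^i); its value lies in
   {0,1} of F, and we return it as a boolean (true <-> 1). *)
Definition absTr (F : finFieldType) (m : nat) (x : F) : bool :=
  (\sum_(i < m) x ^+ (2 ^ i)) == 1.

Definition walsh (F : finFieldType) (m : nat) (f : F -> F -> bool) (a b : F) : int :=
  \sum_(x : F) \sum_(y : F)
     (-1 : int) ^+ (f x y (+) absTr m (a * x + b * y)).

Definition bent (F : finFieldType) (m : nat) (f : F -> F -> bool) : Prop :=
  forall a b : F, `|walsh m f a b| = 2%:Z ^+ m.

(* Dual: W_f(a,b) = 2^m (-1)^{f*(a,b)}; for bent f, f*(a,b) = 1 iff W_f(a,b) = -2^m. *)
Definition dual (F : finFieldType) (m : nat) (f : F -> F -> bool) (a b : F) : bool :=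
  walsh m f a b == - (2%:Z ^+ m).

(* Main.v *)
Require Import Defs.
From HB Require Import structures.
From mathcomp Require Import all_boot all_order all_algebra all_fingroup all_field zify.
Import Order.TTheory GRing.Theory Num.Theory.
Local Open Scope ring_scope.

Lemma xor4 (p q r s : bool) : p (+) q (+) (r (+) s) = p (+) r (+) (q (+) s).
Proof. by case: p; case: q; case: r; case: s. Qed.

Lemma xor6 (a1 a2 a3 c1 c2 c3 : bool) :
  a1 (+) c1 (+) (a2 (+) c2) (+) (a3 (+) c3) = a1 (+) a2 (+) a3 (+) (c1 (+) c2 (+) c3).
Proof. by case: a1; case: a2; case: a3; case: c1; case: c2; case: c3. Qed.

Lemma xor9 (q1 q2 q3 r1 r2 r3 t1 t2 t3 : bool) :
  q1 (+) q2 (+) q3 (+) (r1 (+) r2 (+) r3) = true ->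
  q1 (+) t1 (+) (q2 (+) t2) (+) (q3 (+) t3) (+) (r1 (+) r2 (+) r3 (+) (t1 (+) t2 (+) t3)) = true.
Proof. by case: q1; case: q2; case: q3; case: r1; case: r2; case: r3; case: t1; case: t2; case: t3. Qed.

Section Tr.
Variables (F : finFieldType) (m : nat).
Hypothesis hm : (0 < m)%N.
Hypothesis hF : #|F| = (2 ^ m)%N.

Lemma char2 : 2%N \in [pchar F].
Proof. exact: card_finPcharP hF _. Qed.

Lemma sqrD (x y : F) : (x + y) ^+ 2 = x ^+ 2 + y ^+ 2.
Proof. by rewrite sqrrD -mulr_natr mulr2n mulrDr addrr_pchar2 ?char2 // addr0. Qed.

Lemma frob2 i (x y : F) : (x + y) ^+ (2 ^ i) = x ^+ (2 ^ i) + y ^+ (2 ^ i).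
Proof.
elim: i x y => [|i IH] x y; first by rewrite expn0 !expr1.
by rewrite expnS !exprM sqrD IH.
Qed.

Definition Tsum (x : F) := \sum_(i < m) x ^+ (2 ^ i).

Lemma TsumD x y : Tsum (x + y) = Tsum x + Tsum y.
Proof. by rewrite /Tsum -big_split /=; apply: eq_bigr => i _; rewrite frob2. Qed.

Lemma Tsum0 : Tsum 0 = 0.
Proof. by rewrite /Tsum big1 // => i _; rewrite expr0n expn_eq0. Qed.

Lemma sqr_sum n (a : 'I_n -> F) : (\sum_(i < n) a i) ^+ 2 = \sum_(i < n) a i ^+ 2.
Proof.
elim: n a => [|n IH] a; first by rewrite !big_ord0 expr0n.
by rewrite !big_ord_recr /= sqrD IH.
Qed.

Lemma Tsum01 x : Tsum x = 0 \/ Tsum x = 1.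
Proof.
have e : Tsum x ^+ 2 = Tsum x.
  have [n hmn] : exists n, m = n.+1 by exists m.-1; lia.
  have hF' := hF; rewrite hmn in hF'.
  rewrite /Tsum sqr_sum hmn.
  rewrite big_ord_recr big_ord_recl /= addrC expn0 expr1.
  rewrite -exprM -expnSr -hF' expf_card; congr (_ + _).
  by apply: eq_bigr => i _; rewrite -exprM -expnSr.
have : Tsum x * (Tsum x - 1) = 0 by rewrite mulrBr mulr1 -expr2 e subrr.
by move/eqP; rewrite mulf_eq0 subr_eq0 => /orP[] /eqP; [left|right].
Qed.

Lemma Tsum_nz : exists c, Tsum c = 1.
Proof.
case: (pickP (fun c => Tsum c == 1)) => [c /eqP|H]; first by exists c.
exfalso.
have [n hmn] : exists n, m = n.+1 by exists m.-1; lia.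
have hF' := hF; rewrite hmn in hF'.
pose P : {poly F} := \sum_(i < n.+1) 'X^(2 ^ i).
have PE x : P.[x] = Tsum x.
  rewrite /P horner_sum /Tsum hmn; apply: eq_bigr => i _; by rewrite hornerXn.
have Pc k : P`_k = \sum_(i < n.+1) (k == 2 ^ i)%N%:R.
  by rewrite /P coef_sum; apply: eq_bigr => i _; rewrite coefXn.
have P0 : P != 0.
  apply/negP => /eqP /(congr1 (fun p : {poly F} => p`_(2 ^ n))).
  rewrite Pc coef0 big_ord_recr /= eqxx big1 ?add0r => [/eqP|i _]; first by rewrite oner_eq0.
  rewrite eqn_exp2l //; case: i => i /= hi.
  by have -> : (n == i)%N = false by apply/negbTE; lia.
have sP : (size P <= (2 ^ n).+1)%N.
  apply/leq_sizeP => j hj; rewrite Pc big1 // => i _.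
  have : (2 ^ i <= 2 ^ n)%N by rewrite leq_exp2l // -ltnS.
  by move=> hi; have -> : (j == 2 ^ i)%N = false by apply/negbTE; lia.
have := max_poly_roots P0 (_ : all (root P) (enum F)) (enum_uniq F).
rewrite -cardE hF' => /(_ _)/leq_trans/(_ sP).
move=> h; have /h : all (root P) (enum F).
  apply/allP => x _; rewrite /root PE.
  by case: (Tsum01 x) => e; [rewrite e|move: (H x); rewrite e eqxx].
rewrite expnS; have := expn_gt0 2 n; lia.
Qed.

Lemma absTrE (x : F) : absTr m x = (Tsum x == 1).
Proof. by []. Qed.

Lemma absTrD (x y : F) : absTr m (x + y) = absTr m x (+) absTr m y.
Proof.
rewrite !absTrE TsumD.
have h11 : (1 : F) + 1 = 0 by rewrite addrr_pchar2 ?char2.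
have h10 : (0 : F) == 1 = false by rewrite eq_sym oner_eq0.
by case: (Tsum01 x) => ->; case: (Tsum01 y) => ->;
  rewrite ?addr0 ?add0r ?h11 ?eqxx ?h10.
Qed.

Lemma absTr0 : absTr m (0 : F) = false.
Proof. by rewrite absTrE Tsum0 eq_sym oner_eq0. Qed.


Lemma charsum (c : F) :
  \sum_(x : F) (-1 : int) ^+ absTr m (x * c) = if c == 0 then 2%:Z ^+ m else 0.
Proof.
case: eqP => [->|/eqP cn0].
  under eq_bigr => x _ do rewrite mulr0 absTr0 expr0.
  by rewrite sumr_const hF natrX.
have [x0 hx0] := Tsum_nz.
set S := (\sum_(x : F) _).
have : S = - S.
  rewrite {1}/S (reindex_inj (addIr (x0 / c))) /=.
  rewrite /S -sumrN; apply: eq_bigr => x _.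
  rewrite mulrDl divfK // absTrD (absTrE x0) hx0 eqxx signr_addb expr1.
  by rewrite mulrN1.
lia.
Qed.

Lemma walshE (phi : {perm F}) (h : F -> bool) (a b : F) :
  walsh m (fun x y => absTr m (x * phi y) (+) h y) a b =
  2%:Z ^+ m * (-1) ^+ (h ((phi^-1)%g a) (+) absTr m (b * (phi^-1)%g a)).
Proof.
rewrite /walsh exchange_big /=.
have E y : \sum_(x : F) (-1 : int) ^+ (absTr m (x * phi y) (+) h y (+) absTr m (a * x + b * y))
    = (if phi y + a == 0 then 2%:Z ^+ m else 0) * (-1) ^+ (h y (+) absTr m (b * y)).
  rewrite -charsum mulr_suml; apply: eq_bigr => x _.
  rewrite -signr_addb mulrDr (mulrC x a) !absTrD.
  by rewrite xor4.
rewrite (eq_bigr _ (fun y _ => E y)).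
rewrite (bigD1 ((phi^-1)%g a)) //= permKV addrr_pchar2 ?char2 // eqxx.
rewrite big1 ?addr0 // => y hy.
suff -> : (phi y + a == 0) = false by rewrite mul0r.
apply/negbTE; apply: contra hy; rewrite addr_eq0 oppr_pchar2 ?char2 // => /eqP <-.
by rewrite permK.
Qed.

Lemma bentE (f : F -> F -> bool) (k : F -> F -> bool) :
  (forall a b, walsh m f a b = 2%:Z ^+ m * (-1) ^+ k a b) ->
  bent m f /\ forall a b, dual m f a b = k a b.
Proof.
move=> hw; split => a b; rewrite ?/dual hw.
  by rewrite normrM normr_sign mulr1 ger0_norm // exprn_ge0.
have hp : (0 < 2%:Z ^+ m) by rewrite exprn_gt0.
case: (k a b); rewrite ?expr1 ?mulrN1 ?expr0 ?mulr1 ?eqxx //.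
by apply/negbTE; lia.
Qed.

End Tr.

Theorem theorem7 (m : nat) (F : finFieldType) (hm : (0 < m)%N)
  (hF : #|F| = (2 ^ m)%N)
  (phi1 phi2 phi3 psi : {perm F})
  (h12 : phi1 != phi2) (h13 : phi1 != phi3) (h23 : phi2 != phi3)
  (hpsi : forall x : F, psi x = phi1 x + phi2 x + phi3 x)
  (hpsiinv : forall x : F,
     (psi^-1)%g x = (phi1^-1)%g x + (phi2^-1)%g x + (phi3^-1)%g x)
  (h1 h2 h3 : F -> bool)
  (hh : forall x : F,
     h1 ((phi1^-1)%g x) (+) h2 ((phi2^-1)%g x) (+) h3 ((phi3^-1)%g x)
     (+) (h1 ((psi^-1)%g x) (+) h2 ((psi^-1)%g x) (+) h3 ((psi^-1)%g x)) = true) :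
  let f1 := fun x y : F => absTr m (x * phi1 y) (+) h1 y in
  let f2 := fun x y : F => absTr m (x * phi2 y) (+) h2 y in
  let f3 := fun x y : F => absTr m (x * phi3 y) (+) h3 y in
  let f4 := fun x y : F => f1 x y (+) f2 x y (+) f3 x y in
  [/\ bent m f1, bent m f2, bent m f3, bent m f4 &
      forall a b : F,
        dual m f1 a b (+) dual m f2 a b (+) dual m f3 a b (+) dual m f4 a b = true].
Proof.
move=> f1 f2 f3 f4.
have [B1 D1] := bentE F m hm hF _ _ (walshE F m hm hF phi1 h1).
have [B2 D2] := bentE F m hm hF _ _ (walshE F m hm hF phi2 h2).
have [B3 D3] := bentE F m hm hF _ _ (walshE F m hm hF phi3 h3).
have W4 a b : walsh m f4 a b =
    walsh m (fun x y => absTr m (x * psi y) (+) (fun y => h1 y (+) h2 y (+) h3 y) y) a b.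
  rewrite /walsh; apply: eq_bigr => x _; apply: eq_bigr => y _.
  rewrite /f4 /f1 /f2 /f3 hpsi !mulrDr !(absTrD F m hm hF). by rewrite (xor6 (absTr m (x * phi1 y))).
have [B4 D4] := bentE F m hm hF _ _ (fun a b => etrans (W4 a b) (walshE F m hm hF psi _ a b)).
split => // a b.
rewrite D1 D2 D3 D4 /=.
have -> : absTr m (b * (psi^-1)%g a) =
    absTr m (b * (phi1^-1)%g a) (+) absTr m (b * (phi2^-1)%g a) (+) absTr m (b * (phi3^-1)%g a).
  by rewrite hpsiinv !mulrDr !(absTrD F m hm hF).
exact: xor9 (hh a).
Qed.
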